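(* In the synchronous authenticated setting with $n$ parties of which at most $t<n/2$ are Byzantine, the protocol ''Synchronous Crypto. $\frac{n}{2}$-BB'' described in the context, run with an $l$-bit sender input, satisfies Termination, Agreement and Validity of Byzantine broadcast, and has communication complexity $O(nl+\mathcal{B}(k)+\mathcal{A}(1)+kn^2)$.
   Context: Model: $n$ parties connected pairwise by reliable authenticated channels; synchronous; static PPT (in security parameter $k$) adversary corrupting up to $t$ parties (Byzantine). Trusted setup: PKI and accumulator key $ak$. Properties hold except with probability negligible in $k$. Communication complexity = worst-case total bits sent by honest parties. Byzantine broadcast (BB): sender $P_s$ holds input $m$; Termination: every honest party outputs; Agreement: all honest outputs equal; Validity: if the sender is honest, all honest parties output $m$. A $k$-bit BB oracle has cost $\mathcal{B}(k)$. Byzantine agreement (BA): each party has an input; every honest party outputs, honest outputs are equal, and if all honest inputs equal $v$ the output is $v$; a 1-bit BA oracle has cost $\mathcal{A}(1)$. Reed–Solomon code: $\texttt{ENC}$ maps $b$ data symbols to $n$ codeword symbols, any $b$ of which determine the data; $\texttt{DEC}$ corrects $c$ errors and $d$ erasures whenever $n-b\ge 2c+d$. Let $b=n-t$. Accumulator: deterministic $\texttt{Eval}(ak,\mathcal{D})$ returns an $O(k)$-bit value; $\texttt{CreateWit}(ak,z,d)$ returns an $O(k)$-bit witness for $d\in\mathcal{D}$; $\texttt{Verify}(ak,z,w,d)$ accepts honestly generated witnesses; collision-free: a PPT adversary cannot output $\mathcal{D}$, $d'\notin\mathcal{D}$, $w'$ with $\texttt{Verify}(ak,\texttt{Eval}(ak,\mathcal{D}),w',d')$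 true except with negligible probability. Subroutines: $\texttt{Encode}(m,b)$ splits $m$ into $b$ equal blocks, computes $(s_1,\dots,s_n)=\texttt{ENC}(\text{blocks})$, returns $((1,s_1),\dots,(n,s_n))$. $\texttt{Distribute}(\mathcal{D},ak,z)$: send $(s_j,\texttt{CreateWit}(ak,z,(j,s_j)))$ to each $P_j$. $\texttt{Reconstruct}(\mathcal{S},ak,z,d_0)$: erase every $s_j$ whose witness fails $\texttt{Verify}(ak,z,w_j,(j,s_j))$ (or is missing), apply $\texttt{DEC}$ with $c=0,d=d_0$, return concatenated blocks. Protocol: (1) The sender computes $\mathcal{D}_s=\texttt{Encode}(m_s,b)$, $z_s=\texttt{Eval}(ak,\mathcal{D}_s)$, sends $m_s$ to every party, and broadcasts $z_s$ via a $k$-bit BB oracle. (2) Each $P_i$, with $m$ the message received from the sender and $z$ the BB output, computes $\mathcal{D}_i=\texttt{Encode}(m,b)$, $z_i=\texttt{Eval}(ak,\mathcal{D}_i)$, sets $happy_i=1$ if $z_i=z$ and $0$ otherwise, and inputs $happy_i$ to a 1-bit BA oracle. (3) If that outputs $0$, output $\bot$ and abort; if it outputs $1$ and $happy_i=1$, invoke $\texttt{Distribute}(\mathcal{D}_i,ak,z)$. (4) If some received pair $(s_i,w_i)$ satisfies $\texttt{Verify}(ak,z,w_i,(i,s_i))$, send it to all parties. (5) If $happy_i=1$ set $o_i=m$; otherwise $o_i=\texttt{Reconstruct}(\mathcal{S}_i,ak,z,t)$, where $\mathcal{S}_i$ collects the pair received from each $P_j$ in step 4. (6) Output $o_i$.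 *)

(* Defs.v *)
From HB Require Import structures.
From mathcomp Require Import all_boot.
Set Implicit Arguments. Unset Strict Implicit. Unset Printing Implicit Defensive.

Definition bits := seq bool.
(* accumulated items (j, s_j); indices are 0-based *)
Definition item := (nat * bits)%type.

Record accumulator (AK : Type) := Accumulator {
  acc_eval : AK -> seq item -> bits;
  acc_createwit : AK -> bits -> item -> bits;
  acc_verify : AK -> bits -> bits -> item -> bool
}.

Definition acc_correct AK (A : accumulator AK) (ak : AK) : Prop :=
  forall (D : seq item) (d : item), d \in D ->
    acc_verify A ak (acc_eval A ak D) (acc_createwit A ak (acc_eval A ak D) d) d.

Definition acc_size AK (A : accumulator AK) (ak : AK) (k ca : nat) : Prop :=
  [/\ forall D, size (acc_eval A ak D) <= ca * k,
      forall z d, size (acc_createwit A ak z d) <= ca * k &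
      forall z w d, acc_verify A ak z w d -> size w <= ca * k].

Record rs_code := RSCode {
  rs_enc : seq bits -> seq bits;
  rs_dec : nat -> nat -> seq (option bits) -> seq bits (* DEC c d; None = erasure *)
}.

Definition n_erasures (r : seq (option bits)) : nat :=
  count (fun o => o == None) r.
Definition n_errors (r : seq (option bits)) (cw : seq bits) : nat :=
  count (fun p : option bits * bits =>
           if p.1 is Some x then x != p.2 else false) (zip r cw).

(* ENC maps b symbols of w bits (over GF(2^w), hence n <= 2^w) to n symbols of
   w bits; DEC c d corrects up to c errors and d erasures when n - b >= 2c + d *)
Definition rs_spec (C : rs_code) (n b : nat) : Prop :=
  forall (w : nat) (data : seq bits),
    n <= 2 ^ w -> size data = b -> all (fun x => size x == w) data ->
    [/\ size (rs_enc C data) = n,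
        all (fun x => size x == w) (rs_enc C data) &
        forall (c d : nat) (r : seq (option bits)), size r = n ->
          n_errors r (rs_enc C data) <= c -> n_erasures r <= d ->
          2 * c + d <= n - b -> rs_dec C c d r = data].

Definition ceildiv (l b : nat) : nat := (l + b.-1) %/ b.
(* block width: ceil(l/b), enlarged to log2 n so that an RS code exists *)
Definition blk_w (n b l : nat) : nat := maxn (ceildiv l b) (up_log 2 n).
Definition pad (L : nat) (x : bits) : bits := take L (x ++ nseq L false).
Definition split_blocks (w b : nat) (x : bits) : seq bits :=
  mkseq (fun i => take w (drop (i * w) x)) b.

Definition Encode (C : rs_code) (n b l : nat) (m : bits) : seq item :=
  let w := blk_w n b l in
  let cw := rs_enc C (split_blocks w b (pad (b * w) m)) in
  [seq (j, nth [::] cw j) | j <- iota 0 n].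

(* Reconstruct(S, ak, z, d0); S lists the pair received from P_0, ..., P_{n-1};
   the padding is removed by truncating to the (public) length l *)
Definition Reconstruct (C : rs_code) AK (A : accumulator AK) (ak : AK) (l : nat)
    (S : seq (option (bits * bits))) (z : bits) (d0 : nat) : bits :=
  take l (flatten (rs_dec C 0 d0
    [seq (match p.2 with
          | Some (x, w) => if acc_verify A ak z w (p.1, x) then Some x else None
          | None => None end) | p <- zip (iota 0 (size S)) S])).

Record adv_choice (n l : nat) := AdvChoice {
  a_msg1 : 'I_n -> l.-tuple bool;  (* step 1 message received by P_i from a corrupt sender *)
  a_bb : 'I_n -> bits;             (* output of the k-bit BB oracle at P_i *)
  a_ba : 'I_n -> bool;             (* output of the 1-bit BA oracle at P_i *)
  a_step3 : 'I_n -> 'I_n -> option (bits * bits); (* a_step3 j i: corrupt P_j -> P_i, step 3 *)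
  a_step4 : 'I_n -> 'I_n -> option (bits * bits)  (* a_step4 j i: corrupt P_j -> P_i, step 4 *)
}.

Definition optsize (o : option (bits * bits)) : nat :=
  if o is Some (x, w) then size x + size w else 0.

Section Execution.
Variables (n t l k : nat) (AK : Type) (A : accumulator AK) (ak : AK) (code : rs_code).
Variables (s : 'I_n) (m : l.-tuple bool) (Cor : {set 'I_n}) (adv : adv_choice n l).

Definition honest (i : 'I_n) : bool := i \notin Cor.
Definition bsz : nat := n - t.

Definition recv1 (i : 'I_n) : bits := if s \in Cor then val (a_msg1 adv i) else val m.
Definition D_s : seq item := Encode code n bsz l (val m).
Definition z_s : bits := acc_eval A ak D_s.
Definition Dp (i : 'I_n) : seq item := Encode code n bsz l (recv1 i).
Definition zp (i : 'I_n) : bits := a_bb adv i.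
Definition happy (i : 'I_n) : bool := acc_eval A ak (Dp i) == zp i.

(* ideal oracles: BB (on z_s) and BA (on the happy bits); termination is built in *)
Definition bb_ok : Prop :=
  (forall i j, honest i -> honest j -> a_bb adv i = a_bb adv j) /\
  (honest s -> forall i, honest i -> a_bb adv i = z_s).
Definition ba_ok : Prop :=
  (forall i j, honest i -> honest j -> a_ba adv i = a_ba adv j) /\
  (forall v : bool, (forall i, honest i -> happy i = v) ->
     forall i, honest i -> a_ba adv i = v).

(* step 3: Distribute by an honest P_j, message to P_i *)
Definition dist (j i : 'I_n) : option (bits * bits) :=
  if a_ba adv j && happy j then
    let x := (nth (0, [::]) (Dp j) i).2 in
    Some (x, acc_createwit A ak (zp j) (val i, x))
  else None.
Definition recv3 (i j : 'I_n) : option (bits * bits) :=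
  if j \in Cor then a_step3 adv j i else dist j i.
Definition fwd (i : 'I_n) : option (bits * bits) :=
  if a_ba adv i then
    ohead [seq p <- pmap id [seq recv3 i j | j <- enum 'I_n]
           | acc_verify A ak (zp i) p.2 (val i, p.1)]
  else None.
Definition recv4 (i j : 'I_n) : option (bits * bits) :=
  if j \in Cor then a_step4 adv j i else fwd j.
(* steps 5-6; None = bot *)
Definition output (i : 'I_n) : option bits :=
  if ~~ a_ba adv i then None
  else if happy i then Some (recv1 i)
  else Some (Reconstruct code A ak l [seq recv4 i j | j <- enum 'I_n] (zp i) t).

Definition Termination : Prop := forall i, honest i -> exists o, output i = o.
Definition Agreement : Prop :=
  forall i j, honest i -> honest j -> output i = output j.
Definition Validity : Prop := honest s -> forall i, honest i -> output i = Some (val m).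

(* total number of bits sent by honest parties, oracle costs Bk = B(k), A1 = A(1) *)
Definition comm_cost (Bk A1 : nat) : nat :=
  (if honest s then n * l else 0) + Bk + A1
  + \sum_(j | honest j) \sum_(i < n) optsize (dist j i)
  + \sum_(j | honest j) n * optsize (fwd j).

(* an accumulator collision (D, d', w') computable from the execution:
   D = the set accumulated by an honest party, (d', w') an item/witness pair
   either received by an honest party or honestly generated by an honest party *)
Definition seen_pair (d : item) (w : bits) : Prop :=
  exists i : 'I_n, honest i /\
   ((exists j x, recv3 i j = Some (x, w) /\ d = (val i, x)) \/
    (exists j x, recv4 i j = Some (x, w) /\ d = (val j, x)) \/
    (d \in Dp i /\ w = acc_createwit A ak (acc_eval A ak (Dp i)) d)).
Definition collision_found : Prop :=
  exists (h : 'I_n) (d : item) (w : bits), honest h /\ seen_pair d w /\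
    d \notin Dp h /\ acc_verify A ak (acc_eval A ak (Dp h)) w d.

End Execution.

(* Main.v *)
Require Import Defs.
From HB Require Import structures.
From mathcomp Require Import all_boot zify.
From Stdlib Require Import Classical.
Set Implicit Arguments. Unset Strict Implicit. Unset Printing Implicit Defensive.

Lemma cnt n (C : {set 'I_n}) : count (mem C) (enum 'I_n) = #|C|.
Proof. rewrite cardE /enum_mem size_filter /= /enum_mem /= count_filter.
 by apply: eq_count => x /=; rewrite andbT. Qed.

Lemma split_reshape w b x :
  split_blocks w b x = reshape (nseq b w) x.
Proof.
rewrite /split_blocks /mkseq.
elim: b x => [|b IH] x //=.
rewrite mul0n drop0; congr (_ :: _).
rewrite -IH -(addn0 1) iotaDl -map_comp; apply: eq_map => i /=.
by rewrite drop_drop mulnDl mul1n addnC.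
Qed.

Lemma blocks_ok w b x : size x = b * w ->
  [/\ size (split_blocks w b x) = b,
      all (fun y => size y == w) (split_blocks w b x) &
      flatten (split_blocks w b x) = x].
Proof.
move=> Hx; split.
- by rewrite size_mkseq.
- apply/allP => y /mapP [i]; rewrite mem_iota add0n => /andP [_ ilt] ->.
  rewrite size_takel // size_drop Hx.
  have : i.+1 * w <= b * w by rewrite leq_mul2r ilt orbT.
  rewrite mulSn; lia.
- rewrite split_reshape reshapeKr // sumn_nseq Hx mulnC //.
Qed.

Lemma pad_ok L x : size x <= L -> size (pad L x) = L /\ take (size x) (pad L x) = x.
Proof.
move=> Hx; rewrite /pad; split.
- by rewrite size_takel // size_cat size_nseq leq_addl.
- by rewrite take_takel // take_size_cat.
Qed.

Definition cwof code n b l (m : bits) :=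
  rs_enc code (split_blocks (blk_w n b l) b (pad (b * blk_w n b l) m)).

Lemma n_le_2w n b l : n <= 2 ^ blk_w n b l.
Proof.
apply: (leq_trans (@up_logP 2 n isT)).
by rewrite leq_exp2l // leq_maxr.
Qed.

Lemma l_le_bw n b l : 0 < b -> l <= b * blk_w n b l.
Proof.
move=> Hb; apply: (@leq_trans (b * ceildiv l b)); last by rewrite leq_mul2l leq_maxl orbT.
rewrite /ceildiv.
have := divn_eq (l + b.-1) b.
have := ltn_pmod (l + b.-1) Hb.
lia.
Qed.

Lemma data_ok n b l m : 0 < b -> size m = l ->
  let w := blk_w n b l in
  let data := split_blocks w b (pad (b * w) m) in
  [/\ size data = b, all (fun y => size y == w) data & take l (flatten data) = m].
Proof.
move=> Hb Hm w data.
have Hl : size m <= b * w by rewrite Hm; apply: l_le_bw.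
have [P1 P2] := pad_ok Hl.
have [D1 D2 D3] := blocks_ok P1.
by split => //; rewrite /data D3 -Hm.
Qed.

Lemma cw_props code n t l m : t < n -> rs_spec code n (n - t) -> size m = l ->
  size (cwof code n (n - t) l m) = n /\
  forall q, size (nth [::] (cwof code n (n - t) l m) q) <= blk_w n (n - t) l.
Proof.
move=> Ht Hrs Hm.
have Hb : 0 < n - t by lia.
have [D1 D2 D3] := data_ok n Hb Hm.
have [E1 E2 _] := Hrs _ _ (n_le_2w n (n - t) l) D1 D2.
rewrite /cwof; split => // q.
case: (ltnP q n) => Hq.
  by move/all_nthP: E2 => /(_ [::] q); rewrite E1 => /(_ Hq) /eqP ->.
by rewrite nth_default // E1.
Qed.

Lemma dec_ok code n t l m (g : 'I_n -> option bits) :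
  t < n -> rs_spec code n (n - t) -> size m = l ->
  (forall p, g p = None \/ g p = Some (nth [::] (cwof code n (n - t) l m) p)) ->
  count (fun p => g p == None) (enum 'I_n) <= t ->
  take l (flatten (rs_dec code 0 t [seq g p | p <- enum 'I_n])) = m.
Proof.
move=> Ht Hrs Hm Hg Hc.
have Hb : 0 < n - t by lia.
have [D1 D2 D3] := data_ok n Hb Hm.
have [E1 E2 E3] := Hrs _ _ (n_le_2w n (n - t) l) D1 D2.
set cw := rs_enc _ _ in E1 E2 E3.
rewrite E3 //.
- by rewrite size_map size_enum_ord.
- have -> : cw = [seq nth [::] cw (val p) | p <- enum 'I_n].
    by rewrite (map_comp (nth [::] cw) val) val_enum_ord -E1 -/(mkseq _ _) mkseq_nth.
  rewrite /n_errors zip_map count_map leqn0; apply/eqP.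
  rewrite (eq_count (a2 := pred0)) ?count_pred0 // => p /=.
  by case: (Hg p) => -> //=; rewrite eqxx.
- by rewrite /n_erasures count_map.
- lia.
Qed.

Lemma cwof_inj code n t l m1 m2 : t < n -> rs_spec code n (n - t) ->
  size m1 = l -> size m2 = l ->
  cwof code n (n - t) l m1 = cwof code n (n - t) l m2 -> m1 = m2.
Proof.
move=> Ht Hrs H1 H2 He.
set g := fun p : 'I_n => Some (nth [::] (cwof code n (n - t) l m1) p).
have Hc : count (fun p => g p == None) (enum 'I_n) <= t.
  by rewrite (eq_count (a2 := pred0)) ?count_pred0.
rewrite -(dec_ok (g := g) Ht Hrs H1) //; last by move=> p; right.
rewrite -(dec_ok (g := g) Ht Hrs H2) //; last by move=> p; right; rewrite /g He.
Qed.

Lemma Encode_E code n b l m :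
  Encode code n b l m = [seq (j, nth [::] (cwof code n b l m) j) | j <- iota 0 n].
Proof. by []. Qed.

Lemma Encode_mem code n b l m q x :
  (q, x) \in Encode code n b l m -> x = nth [::] (cwof code n b l m) q.
Proof. by rewrite Encode_E => /mapP [j _ [-> ->]]. Qed.

Lemma Encode_in code n b l m (q : 'I_n) :
  (val q, nth [::] (cwof code n b l m) q) \in Encode code n b l m.
Proof. by rewrite Encode_E; apply: (map_f (fun j => (j, _))); rewrite mem_iota /=. Qed.

Lemma Encode_nth code n b l m (q : 'I_n) :
  nth (0, [::]) (Encode code n b l m) q = (val q, nth [::] (cwof code n b l m) q).
Proof.
rewrite Encode_E (nth_map 0) ?size_iota // nth_iota //.
Qed.

Lemma sum_bound n (P : pred 'I_n) (F : 'I_n -> nat) c :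
  (forall j, P j -> F j <= c) -> \sum_(j < n | P j) F j <= n * c.
Proof.
move=> H; apply: (@leq_trans (\sum_(j < n | P j) c)); first exact: leq_sum.
rewrite big_mkcond /=.
apply: (@leq_trans (\sum_(j < n) c)).
  by apply: leq_sum => j _; case: (P j).
by rewrite sum_nat_const card_ord.
Qed.

Theorem mainTheorem9 :
  forall ca : nat, exists Cst : nat,
  forall (n t l k : nat) (AK : Type) (A : accumulator AK) (ak : AK) (code : rs_code)
    (s : 'I_n) (m : l.-tuple bool) (Cor : {set 'I_n}) (adv : adv_choice n l)
    (Bk A1 : nat),
    2 * t < n -> #|Cor| <= t -> 0 < k -> n <= 2 ^ k ->
    acc_correct A ak -> acc_size A ak k ca -> rs_spec code n (n - t) ->
    bb_ok t A ak code s m Cor adv -> ba_ok t A ak code s m Cor adv ->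
    (Termination t A ak code s m Cor adv /\ Agreement t A ak code s m Cor adv /\
     Validity t A ak code s m Cor adv /\
     comm_cost t A ak code s m Cor adv Bk A1 <= Cst * (n * l + Bk + A1 + k * n ^ 2))
    \/ collision_found t A ak code s m Cor adv.
Proof.
move=> ca; exists (6 + 2 * ca).
move=> n t l k AK A ak code s m Cor adv Bk A1 Hn2 HC Hk Hnk Hac [Sz1 Sz2 Sz3] Hrs
  [BB1 BB2] [BA1 BA2].
case: (classic (collision_found t A ak code s m Cor adv)) => [col|ncol]; [by right|left].
have Ht : t < n by lia.
have Hr1 : forall i, size (recv1 s m Cor adv i) = l.
  by move=> i; rewrite /recv1; case: ifP => _; apply: size_tuple.
have NC : forall h d w, honest Cor h -> seen_pair t A ak code s m Cor adv d w ->
    acc_verify A ak (acc_eval A ak (Dp t code s m Cor adv h)) w d ->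
    d \in Dp t code s m Cor adv h.
  move=> h d w Hh Hs Hv; case: (boolP (d \in _)) => // Hd; exfalso.
  by apply: ncol; exists h, d, w.
have Hzp : forall i j, honest Cor i -> honest Cor j -> zp adv i = zp adv j by exact: BB1.
have Hhap : forall i, happy t A ak code s m Cor adv i ->
    acc_eval A ak (Dp t code s m Cor adv i) = zp adv i.
  by move=> i /eqP.
have LA : forall i h, honest Cor i -> honest Cor h ->
    happy t A ak code s m Cor adv i -> happy t A ak code s m Cor adv h ->
    recv1 s m Cor adv i = recv1 s m Cor adv h.
  move=> i h Hi Hh Hpi Hph.
  apply: (cwof_inj Ht Hrs (Hr1 i) (Hr1 h)).
  have [Si _] := cw_props Ht Hrs (Hr1 i).
  have [Sh _] := cw_props Ht Hrs (Hr1 h).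
  apply: (@eq_from_nth _ [::]); first by rewrite Si Sh.
  move=> q; rewrite Si => Hq.
  set d := (q, nth [::] (cwof code n (n - t) l (recv1 s m Cor adv i)) q).
  have Hd : d \in Dp t code s m Cor adv i by exact: (@Encode_in code n (n - t) l _ (Ordinal Hq)).
  have : d \in Dp t code s m Cor adv h.
    apply: (NC h d (acc_createwit A ak (acc_eval A ak (Dp t code s m Cor adv i)) d)) => //.
      by exists i; split => //; right; right.
    rewrite (Hhap h Hph) -(Hzp i h Hi Hh) -(Hhap i Hpi); exact: Hac.
  by move/Encode_mem.
have Lex : forall i, honest Cor i -> a_ba adv i ->
    exists h, honest Cor h /\ happy t A ak code s m Cor adv h.
  move=> i Hi Hb; apply: NNPP => Hno.
  have : a_ba adv i = false.
    apply: (BA2 false) => // h Hh; apply/negbTE/negP => Hph; apply: Hno; by exists h.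
  by rewrite Hb.
have LB : forall j h, honest Cor j -> honest Cor h -> happy t A ak code s m Cor adv h ->
    a_ba adv j ->
    Reconstruct code A ak l [seq recv4 t A ak code s m Cor adv j p | p <- enum 'I_n]
      (zp adv j) t = recv1 s m Cor adv h.
  move=> j h Hj Hh Hph Hbj.
  have Hbh : a_ba adv h by rewrite (BA1 h j Hh Hj).
  rewrite /Reconstruct size_map size_enum_ord -val_enum_ord zip_map -map_comp.
  apply: dec_ok => //.
  - move=> p /=; case E: (recv4 _ _ _ _ _ _ _ _ j p) => [[x w]|]; last by left.
    case: ifP => V; last by left.
    right; congr Some; apply: Encode_mem.
    apply: (NC h (val p, x) w) => //.
      by exists j; split => //; right; left; exists p, x.
    by rewrite (Hhap h Hph) (Hzp h j Hh Hj).
  - apply: leq_trans HC; rewrite -cnt; apply: sub_count => p /= /eqP Hp.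
    apply/negPn/negP => Hpp.
    move: Hp; rewrite /recv4 (negbTE Hpp) /fwd (BA1 p j Hpp Hj) Hbj.
    set x0 := nth [::] (cwof code n (n - t) l (recv1 s m Cor adv h)) p.
    set y0 := (x0, acc_createwit A ak (zp adv h) (val p, x0)).
    set L := filter _ _.
    have Hy0 : y0 \in L.
      rewrite mem_filter mem_pmap map_id; apply/andP; split.
        rewrite /= (Hzp p h Hpp Hh) -(Hhap h Hph); apply: Hac; exact: Encode_in.
      apply/mapP; exists h; first by rewrite mem_enum.
      rewrite /recv3 (negbTE Hh) /dist Hbh Hph /=.
      by by rewrite /Dp /bsz Encode_nth.
    case EL: L Hy0 => [|y ys] // _.
    have : y \in L by rewrite EL mem_head.
    rewrite mem_filter => /andP [Vy _].
    case: y Vy EL => x w /= Vy EL.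
    by rewrite (Hzp j p Hj Hpp) Vy.
have LC : forall i h, honest Cor i -> honest Cor h -> happy t A ak code s m Cor adv h ->
    a_ba adv i -> output t A ak code s m Cor adv i = Some (recv1 s m Cor adv h).
  move=> i h Hi Hh Hph Hbi; rewrite /output Hbi /=.
  case: ifP => Hpi; congr Some; [exact: LA | exact: LB].
split; first by move=> i _; eexists.
split.
  move=> i j Hi Hj; case Ebi: (a_ba adv i).
    have [h [Hh Hph]] := Lex i Hi Ebi.
    have Ebj : a_ba adv j by rewrite (BA1 j i Hj Hi).
    by rewrite (LC i h) // (LC j h).
  by rewrite /output Ebi -(BA1 i j Hi Hj) Ebi.
split.
  move=> Hs i Hi.
  have Hp : forall i, honest Cor i -> happy t A ak code s m Cor adv i.
    move=> i' Hi'; rewrite /happy /Dp /recv1 (negbTE Hs) /zp BB2 //.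
  have Hb := BA2 true (fun i' Hi' => Hp i' Hi') i Hi.
  by rewrite /output Hb (Hp i Hi) /recv1 (negbTE Hs).
set W := blk_w n (n - t) l.
have Hdist : forall j i, optsize (dist t A ak code s m Cor adv j i) <= W + ca * k.
  move=> j i; rewrite /dist; case: ifP => //= _.
  apply: leq_add; last exact: Sz2.
  rewrite /Dp /bsz Encode_nth /=; exact: (cw_props Ht Hrs (Hr1 j)).2.
have Hfwd : forall j, honest Cor j -> optsize (fwd t A ak code s m Cor adv j) <= W + ca * k.
  move=> j Hj; rewrite /fwd; case Eb: (a_ba adv j) => //.
  have [h [Hh Hph]] := Lex j Hj Eb.
  set L := filter _ _.
  case EL: L => [|[x w] ys] //=.
  have : (x, w) \in L by rewrite EL mem_head.
  rewrite mem_filter mem_pmap map_id => /andP [V /mapP [q _ Eq]].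
  apply: leq_add; last exact: (Sz3 _ _ _ V).
  have : (val j, x) \in Dp t code s m Cor adv h.
    apply: (NC h (val j, x) w) => //.
      by exists j; split => //; left; exists q, x.
    by rewrite (Hhap h Hph) (Hzp h j Hh Hj).
  move/Encode_mem => ->; exact: (cw_props Ht Hrs (Hr1 h)).2.
have S1 : \sum_(j | honest Cor j) \sum_(i < n) optsize (dist t A ak code s m Cor adv j i)
    <= n * (n * (W + ca * k)).
  by apply: sum_bound => j _; apply: sum_bound => i _; exact: Hdist.
have S2 : \sum_(j | honest Cor j) n * optsize (fwd t A ak code s m Cor adv j)
    <= n * (n * (W + ca * k)).
  by apply: sum_bound => j Hj; rewrite leq_mul2l Hfwd ?orbT.
have S0 : (if honest Cor s then n * l else 0) <= n * l by case: ifP.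
set c := ceildiv l (n - t).
have HW : W <= c + k.
  rewrite /W /blk_w geq_max leq_addr /= (@leq_trans k) ?leq_addl //.
  exact: up_log_min.
have Hc : c * (n - t) <= l + n.
  rewrite /c /ceildiv; apply: (leq_trans (leq_trunc_div _ _)); lia.
have Hnc : n * c <= 2 * l + 2 * n.
  have : n * c <= (2 * (n - t)) * c by rewrite leq_mul2r; apply/orP; right; lia.
  lia.
have X : n * (n * (W + ca * k)) <= 2 * (n * l) + 3 * (k * n ^ 2) + ca * (k * n ^ 2).
  have : n * (n * (W + ca * k)) <= n * (n * (c + k + ca * k)).
    by rewrite !leq_mul2l leq_add2r HW !orbT.
  have : n * (n * c) <= n * (2 * l + 2 * n) by rewrite leq_mul2l Hnc orbT.
  have : n * n <= k * (n * n) by rewrite leq_pmull.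
  rewrite expnS expn1.
  nia.
rewrite /comm_cost.
move: S0 S1 S2 X.
set N := n * l. set K := k * n ^ 2.
set P1 := (if _ then _ else _). set P2 := \sum_(j | _) \sum_(i < n) _.
set P3 := \sum_(j | _) _.
move: (n * (n * (W + ca * k))) => Y.
nia.
Qed.
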